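(* Let $G$ be a finite Weetman graph, $v_0\in V(G)$, and let $C$ be a cluster of $G$ with respect to $v_0$ contained in $S^k$ with $k\ge 1$. Then there is a unique cluster $a(C)\subseteq S^{k-1}$ adjacent to $C$ in the cluster graph $\mathcal{C}(G)$, and every path in $G$ from $v_0$ to a vertex of $C$ contains a vertex of $a(C)$.
   Context: All graphs are simple and connected; $d$ is graph distance and $\mathrm{pred}_{v_0}(v)=\{u : uv\in E(G),\ d(v_0,u)=d(v_0,v)-1\}$. $G$ is Weetman if for every vertex $v_0$: (Triangle Condition) for every two adjacent vertices $v,v'$ with $d(v_0,v)=d(v_0,v')=k$, there is $u$ with $d(v_0,u)=k-1$ and $uv,uv'\in E(G)$; (Interval Condition) for every vertex $v$, the subgraph induced by $\mathrm{pred}_{v_0}(v)$ is connected. For $i\ge0$ let $S^i=\{v: d(v_0,v)=i\}$. The clusters with respect to $v_0$ are the vertex sets of the connected components of the induced subgraphs $G[S^i]$, $i\ge 0$. The cluster graph $\mathcal{C}(G)$ has the clusters as vertices, two distinct clusters $C,C'$ being adjacent iff some $v\in C$, $v'\in C'$ satisfy $vv'\in E(G)$. *)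

(* Defs.v *)
From mathcomp Require Import all_boot.
Set Implicit Arguments. Unset Strict Implicit. Unset Printing Implicit Defensive.

Section Graphs.
Variable T : finType.
Implicit Types (e : rel T) (x y : T).

Fixpoint ball e (n : nat) x : {set T} :=
  match n with
  | 0 => [set x]
  | n'.+1 => ball e n' x :|: [set y | [exists z in ball e n' x, e z y]]
  end.

(* graph distance: least n with y in ball n x; (= #|T| if unreachable, which
   does not happen in a connected graph since distances are < #|T|) *)
Definition dist e x y : nat := find (fun n => y \in ball e n x) (iota 0 #|T|).

Definition simple_graph e := symmetric e /\ irreflexive e.
Definition connected_graph e := forall x y, connect e x y.

Definition restr e (A : {set T}) : rel T := [rel a b | [&& e a b, a \in A & b \in A]].

Definition pred_set e v0 v : {set T} :=
  [set u | e u v & (dist e v0 u).+1 == dist e v0 v].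

Definition sphere e v0 (i : nat) : {set T} := [set v | dist e v0 v == i].

Definition triangle_condition e v0 :=
  forall v v', e v v' -> dist e v0 v = dist e v0 v' ->
    exists u, (dist e v0 u).+1 = dist e v0 v /\ e u v /\ e u v'.

Definition interval_condition e v0 :=
  forall v, forall u w, u \in pred_set e v0 v -> w \in pred_set e v0 v ->
    connect (restr e (pred_set e v0 v)) u w.

Definition weetman e :=
  forall v0, triangle_condition e v0 /\ interval_condition e v0.

Definition is_cluster e v0 (C : {set T}) :=
  exists x, C = [set y | connect (restr e (sphere e v0 (dist e v0 x))) x y].

Definition cluster_adj e (C C' : {set T}) :=
  C != C' /\ exists v v', [/\ v \in C, v' \in C' & e v v'].

End Graphs.

(* Main.v *)
Require Import Defs.
From mathcomp Require Import all_boot zify.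
Set Implicit Arguments. Unset Strict Implicit.

Lemma ball_S (T : finType) (e : rel T) x n : ball e n x \subset ball e n.+1 x.
Proof. by rewrite /= subsetUl. Qed.

Lemma ball_mono (T : finType) (e : rel T) x m n : m <= n -> ball e m x \subset ball e n x.
Proof.
elim: n => [|n IH]; first by rewrite leqn0 => /eqP ->.
rewrite leq_eqVlt => /orP[/eqP->//| lt].
exact: subset_trans (IH lt) (ball_S _ _ _).
Qed.

Lemma in_ballS (T : finType) (e : rel T) x n y :
  (y \in ball e n.+1 x) = (y \in ball e n x) || [exists z in ball e n x, e z y].
Proof. by rewrite /= in_setU in_set. Qed.

Lemma dist_le (T : finType) (e : rel T) x y n : y \in ball e n x -> dist e x y <= n.
Proof.
move=> H; rewrite /dist; case: (ltnP n #|T|) => hn.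
  rewrite leqNgt; apply/negP => lt.
  by have := before_find 0 lt; rewrite nth_iota // add0n H.
by apply: leq_trans (find_size _ _) _; rewrite size_iota.
Qed.

Lemma last_ball (T : finType) (e : rel T) x p : path e x p -> last x p \in ball e (size p) x.
Proof.
elim/last_ind: p => [|p z IH]; first by rewrite /= set11.
rewrite rcons_path last_rcons size_rcons => /andP[pp ez].
rewrite in_ballS; apply/orP; right; apply/existsP; exists (last x p).
by rewrite IH.
Qed.

Lemma reach (T : finType) (e : rel T) x y : connect e x y -> exists2 n, n < #|T| & y \in ball e n x.
Proof.
move/connectP=> [p pth ->]; case: (shortenP pth) => p' pth' uq _.
exists (size p'); last exact: last_ball.
have := max_card (mem (x :: p')); rewrite (card_uniqP uq) /=; done.
Qed.

Lemma dist_ball (T : finType) (e : rel T) x y : connect e x y -> y \in ball e (dist e x y) x.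
Proof.
move=> /reach [n ln yn].
have hh : has (fun m => y \in ball e m x) (iota 0 #|T|).
  by apply/hasP; exists n => //; rewrite mem_iota.
have := nth_find 0 hh; rewrite nth_iota ?add0n //.
by have := hh; rewrite has_find size_iota.
Qed.

Lemma mem_ball (T : finType) (e : rel T) x y n : connect e x y ->
  (y \in ball e n x) = (dist e x y <= n).
Proof.
move=> c; apply/idP/idP; first exact: dist_le.
by move=> le; apply: (subsetP (ball_mono e x le)); apply: dist_ball.
Qed.

Lemma dist0 (T : finType) (e : rel T) x : dist e x x = 0.
Proof. by apply/eqP; rewrite -leqn0; apply: dist_le; rewrite /= set11. Qed.

Lemma dist_edge (T : finType) (e : rel T) x u v : connected_graph e -> e u v ->
  dist e x v <= (dist e x u).+1.
Proof.
move=> C euv; rewrite -mem_ball //= in_ballS; apply/orP; right.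
by apply/existsP; exists u; rewrite euv mem_ball // leqnn.
Qed.

Lemma dist_pred (T : finType) (e : rel T) x v n : connected_graph e ->
  dist e x v = n.+1 -> exists u, e u v /\ (dist e x u).+1 = dist e x v.
Proof.
move=> C dv.
have : v \in ball e n.+1 x by rewrite mem_ball // dv.
rewrite in_ballS mem_ball // dv ltnn /= => /existsP[u /andP[uin euv]].
exists u; split => //; rewrite mem_ball // in uin.
have := dist_edge x C euv; rewrite dv; lia.
Qed.

Lemma restr_sym (T : finType) (e : rel T) (S : {set T}) : symmetric e -> symmetric (restr e S).
Proof. by move=> s a b; rewrite /restr /= s; case: (a \in S); case: (b \in S); rewrite ?andbF ?andbT. Qed.

Lemma connect_restr_in (T : finType) (e : rel T) (S : {set T}) x y :
  connect (restr e S) x y -> x = y \/ y \in S.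
Proof.
move/connectP=> [p pth ->]; case/lastP: p pth => [|p z]; first by left.
rewrite rcons_path last_rcons => /andP[_ /and3P[_ _ ->]]; by right.
Qed.

Lemma connect_restr_sub (T : finType) (e : rel T) (S S' : {set T}) x y : S \subset S' ->
  connect (restr e S) x y -> connect (restr e S') x y.
Proof.
move=> sub; apply: connect_sub => a b /and3P[eab aS bS]; apply: connect1.
by rewrite /restr /= eab !(subsetP sub).
Qed.

Lemma pred_sub (T : finType) (e : rel T) v0 w :
  pred_set e v0 w \subset sphere e v0 (dist e v0 w).-1.
Proof. by apply/subsetP=> u; rewrite !inE => /andP[_ /eqP <-]. Qed.

Lemma ulemma (T : finType) (e : rel T) v0 m w w' u u' : weetman e ->
  dist e v0 w = m -> connect (restr e (sphere e v0 m)) w w' ->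
  u \in pred_set e v0 w -> u' \in pred_set e v0 w' ->
  connect (restr e (sphere e v0 m.-1)) u u'.
Proof.
move=> HW dw /connectP[p pth ->].
elim: p w u dw pth => [|z p IH] w u dw /=.
  move=> _ uw u'w; have := (HW v0).2 w u u' uw u'w.
  by apply: connect_restr_sub; rewrite -dw; apply: pred_sub.
move=> /andP[/and3P[ewz wS zS] pth] uw u'l.
have dz : dist e v0 z = m by move: zS; rewrite inE => /eqP.
have [t [dt [etw etz]]] := (HW v0).1 w z ewz (etrans dw (esym dz)).
have tw : t \in pred_set e v0 w by rewrite inE etw dt eqxx.
have tz : t \in pred_set e v0 z by rewrite inE etz dt dw dz eqxx.
apply: connect_trans (IH z t dz pth tz u'l).
have := (HW v0).2 w u t uw tw.
by apply: connect_restr_sub; rewrite -dw; apply: pred_sub.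
Qed.

Definition par (T : finType) (e : rel T) v0 w := odflt w [pick u in pred_set e v0 w].

Lemma par_pred (T : finType) (e : rel T) v0 w : connected_graph e ->
  0 < dist e v0 w -> par e v0 w \in pred_set e v0 w.
Proof.
move=> C pos; rewrite /par; case: pickP => [u /= //|H].
have [u [euw du]] := dist_pred C (esym (prednK pos)).
by move: (H u); rewrite inE euw du eqxx.
Qed.

Lemma par_dist (T : finType) (e : rel T) v0 w : connected_graph e ->
  0 < dist e v0 w -> (dist e v0 (par e v0 w)).+1 = dist e v0 w.
Proof. by move=> C pos; have := par_pred C pos; rewrite inE => /andP[_ /eqP]. Qed.

Lemma S_lemma (T : finType) (e : rel T) v0 j : connected_graph e -> weetman e ->
  forall n w w', dist e v0 w = j + n ->
  connect (restr e (sphere e v0 (j + n))) w w' ->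
  connect (restr e (sphere e v0 j)) (iter n (par e v0) w) (iter n (par e v0) w').
Proof.
move=> C HW; elim=> [|n IH] w w' dw c; first by rewrite addn0 in c.
rewrite !iterSr; apply: IH.
  by apply/eqP; rewrite -eqSS par_dist ?dw ?addnS.
have dw' : dist e v0 w' = j + n.+1.
  by case: (connect_restr_in c) => [<-//|]; rewrite inE => /eqP.
have := ulemma HW dw c (par_pred C _) (par_pred C _).
by rewrite addnS /=; apply; rewrite ?dw ?dw' addnS.
Qed.

Definition anc (T : finType) (e : rel T) v0 j w := iter (dist e v0 w - j) (par e v0) w.

Lemma adj_up (T : finType) (e : rel T) v0 j w w' : connected_graph e -> weetman e ->
  e w w' -> dist e v0 w' = (dist e v0 w).+1 -> j < dist e v0 w ->
  connect (restr e (sphere e v0 j)) (anc e v0 j w) (anc e v0 j w').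
Proof.
move=> C HW ew dw' lt; rewrite /anc dw' subSn ?(ltnW lt) // iterSr.
set n := dist e v0 w - j.
have dw : dist e v0 w = j + n by rewrite /n subnKC // ltnW.
apply: S_lemma => //.
have := ulemma HW dw' (connect0 _ w') (_ : w \in pred_set e v0 w') (par_pred C _).
rewrite dw' /= dw; apply => //; first by rewrite inE ew dw' eqxx.
Qed.

Lemma adj (T : finType) (e : rel T) v0 j w w' : simple_graph e -> connected_graph e ->
  weetman e -> e w w' -> j < dist e v0 w -> j < dist e v0 w' ->
  connect (restr e (sphere e v0 j)) (anc e v0 j w) (anc e v0 j w').
Proof.
move=> [Hs Hi] C HW ew l1 l2.
have h1 := dist_edge v0 C ew.
have h2 := dist_edge v0 C (_ : e w' w); rewrite Hs in h2; have {}h2 := h2 ew.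
have [eq|[up|dn]] : dist e v0 w = dist e v0 w' \/ dist e v0 w' = (dist e v0 w).+1
   \/ dist e v0 w = (dist e v0 w').+1 by lia.
- rewrite /anc -eq; set n := dist e v0 w - j.
  have dw : dist e v0 w = j + n by rewrite /n subnKC // ltnW.
  apply: S_lemma => //; apply: connect1; rewrite /restr /= ew !inE -eq dw eqxx //.
- exact: adj_up.
- rewrite (sym_connect_sym (restr_sym _ Hs)).
  by apply: adj_up; rewrite // Hs.
Qed.

Lemma path_anc (T : finType) (e : rel T) v0 j x : simple_graph e -> connected_graph e ->
  weetman e -> forall p, path e x p -> dist e v0 x <= j -> j < dist e v0 (last x p) ->
  exists2 y, y \in x :: p & connect (restr e (sphere e v0 j)) y (anc e v0 j (last x p)).
Proof.
move=> S C HW; elim/last_ind => [|p z IH] /=; first by move=> _ a b; lia.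
rewrite rcons_path last_rcons => /andP[pth elz] dx dz.
have memr : forall y, y \in x :: p -> y \in x :: rcons p z.
  by move=> y; rewrite !in_cons mem_rcons in_cons; case: (y == x) => //= ->; rewrite orbT.
case: (leqP (dist e v0 (last x p)) j) => hl.
  have := dist_edge v0 C elz => h.
  have dz' : dist e v0 z = j.+1 by lia.
  have dl : dist e v0 (last x p) = j by lia.
  exists (last x p); first by apply: memr; apply: mem_last.
  rewrite /anc dz' subSn // subnn /=.
  have := ulemma HW dz' (connect0 _ z) (_ : last x p \in pred_set e v0 z) (par_pred C _).
  apply; first by rewrite inE elz dl dz' eqxx.
  by rewrite dz'.
have [y yin cy] := IH pth dx hl.
exists y; first exact: memr.
apply: connect_trans cy _; exact: adj.
Qed.

Theorem mainTheorem5 (T : finType) (e : rel T)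
  (Hsimple : simple_graph e) (Hconn : connected_graph e) (HW : weetman e)
  (v0 : T) (C : {set T}) (k : nat)
  (HC : is_cluster e v0 C) (HCk : C \subset sphere e v0 k) (Hk : 1 <= k) :
  exists A : {set T},
    [/\ is_cluster e v0 A, A \subset sphere e v0 k.-1 & cluster_adj e C A] /\
    (forall B : {set T},
        [/\ is_cluster e v0 B, B \subset sphere e v0 k.-1 & cluster_adj e C B] ->
        B = A) /\
    (forall p : seq T, path e v0 p -> last v0 p \in C ->
        exists2 x, x \in v0 :: p & x \in A).
Proof.
have Hs := Hsimple.1.
have csym : forall S : {set T}, connect_sym (restr e S).
  by move=> S; apply: sym_connect_sym; apply: restr_sym.
case: HC => x HCx.
have xC : x \in C by rewrite HCx inE connect0.
have dx : dist e v0 x = k by move: (subsetP HCk x xC); rewrite inE => /eqP.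
set j := k.-1.
have kj : k = j.+1 by rewrite /j prednK.
have inC : forall y, y \in C -> connect (restr e (sphere e v0 j.+1)) x y.
  by move=> y; rewrite HCx inE dx kj.
have dC : forall y, y \in C -> dist e v0 y = j.+1.
  by move=> y yC; move: (subsetP HCk y yC); rewrite inE kj => /eqP.
set a := par e v0 x.
have apx : a \in pred_set e v0 x by apply: par_pred; rewrite // dx kj.
have da : dist e v0 a = j.
  by move: apx; rewrite inE dx kj => /andP[_ /eqP[]].
have key : forall y u, y \in C -> u \in pred_set e v0 y ->
    connect (restr e (sphere e v0 j)) a u.
  move=> y u yC uy; have := ulemma HW (_ : dist e v0 x = j.+1) (inC y yC) apx uy.
  by apply; rewrite dx kj.
set A := [set y | connect (restr e (sphere e v0 j)) a y].
have Asub : A \subset sphere e v0 j.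
  apply/subsetP => y; rewrite inE => /connect_restr_in [<-|//].
  by rewrite inE da.
exists A; split; [split => //|split].
- by exists a; rewrite da.
- split.
    apply/negP => /eqP E; have : x \in A by rewrite -E.
    by move/(subsetP Asub); rewrite inE dx kj eqn_leq ltnn.
  exists x, a; split => //; first by rewrite inE connect0.
  by move: apx; rewrite inE Hs => /andP[].
- move=> B [[xb HB] Bsub [_ [v [v' [vC v'B evv']]]]].
  have dv' : dist e v0 v' = j by move: (subsetP Bsub v' v'B); rewrite inE => /eqP.
  have xbB : xb \in B by rewrite HB inE connect0.
  have dxb : dist e v0 xb = j by move: (subsetP Bsub xb xbB); rewrite inE => /eqP.
  have v'p : v' \in pred_set e v0 v by rewrite inE (Hs v' v) evv' dv' (dC v vC) eqxx.
  have c1 := key v v' vC v'p.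
  have c2 : connect (restr e (sphere e v0 j)) xb v' by move: v'B; rewrite HB inE dxb.
  have c3 : connect (restr e (sphere e v0 j)) xb a.
    by apply: connect_trans c2 _; rewrite csym.
  apply/setP => y; rewrite HB !inE dxb; apply/idP/idP => h.
    by apply: connect_trans h; rewrite csym.
  exact: connect_trans c3 h.
- move=> p pth lC.
  have h1 : dist e v0 v0 <= j by rewrite dist0.
  have dl := dC _ lC.
  have h2 : j < dist e v0 (last v0 p) by rewrite dl.
  have [y yin cy] := path_anc (j:=j) Hsimple Hconn HW pth h1 h2.
  exists y => //; rewrite inE.
  move: cy; rewrite /anc dl subSn // subnn /= => cy.
  have h3 : 0 < dist e v0 (last v0 p) by rewrite dl.
  have c := key _ _ lC (par_pred Hconn h3).
  by apply: connect_trans c _; rewrite csym.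
Qed.
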